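(* Let $a,b,c,d,e,f,g,h\ge0$ and $k,l>0$ be integers with $a+b+c+d>0$, $e+f>0$, $g+h>0$, and let $$E=\begin{bmatrix} J_{k,a}&J_{k,b}&-J_{k,c}&-J_{k,d}&J_{k,e}&-J_{k,f}&0&0\\ -J_{k,a}&-J_{k,b}&J_{k,c}&J_{k,d}&-J_{k,e}&J_{k,f}&0&0\\ J_{l,a}&-J_{l,b}&J_{l,c}&-J_{l,d}&0&0&J_{l,g}&-J_{l,h}\\ -J_{l,a}&J_{l,b}&-J_{l,c}&J_{l,d}&0&0&-J_{l,g}&J_{l,h} \end{bmatrix}$$ satisfy $E\mathbf 1=0$ and $\mathbf 1^TE=0^T$. Then $E$ is realizable if and only if $g-h$ and $e-f$ are even.
   Context: $J_{p,q}$ is the $p\times q$ all-ones matrix. Two $(0,1)$ matrices $A,B$ are Gram mates if $AA^T=BB^T$, $A^TA=B^TB$ and $A\neq B$. A $(0,1,-1)$ matrix $E$ with $E\mathbf 1=0$, $\mathbf 1^TE=0^T$ is realizable if there is a $(0,1)$ matrix $A$ such that $A$ and $A+E$ are Gram mates. *)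

(* Defs.v *)
From mathcomp Require Import all_boot all_order all_algebra.
Set Implicit Arguments. Unset Strict Implicit. Unset Printing Implicit Defensive.
Import Order.TTheory GRing.Theory Num.Theory.
Local Open Scope ring_scope.

Definition is01 (m n : nat) (A : 'M[int]_(m, n)) : Prop :=
  forall i j, A i j = 0 \/ A i j = 1.

Definition gram_mates (m n : nat) (A B : 'M[int]_(m, n)) : Prop :=
  [/\ is01 A, is01 B, A *m A^T = B *m B^T, A^T *m A = B^T *m B & A <> B].

Definition realizable (m n : nat) (E : 'M[int]_(m, n)) : Prop :=
  exists A : 'M[int]_(m, n), is01 A /\ gram_mates A (A + E).

Definition rowblk (k l i : nat) : nat :=
  if (i < k)%N then 0%N else if (i < k + k)%N then 1%N
  else if (i < k + k + l)%N then 2%N else 3%N.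

Definition colblk (a b c d e f g h j : nat) : nat :=
  if (j < a)%N then 0%N
  else if (j < a + b)%N then 1%N
  else if (j < a + b + c)%N then 2%N
  else if (j < a + b + c + d)%N then 3%N
  else if (j < a + b + c + d + e)%N then 4%N
  else if (j < a + b + c + d + e + f)%N then 5%N
  else if (j < a + b + c + d + e + f + g)%N then 6%N
  else 7%N.

Definition row0 (c : nat) : int :=
  match c with
  | 0%N => 1 | 1%N => 1 | 2%N => -1 | 3%N => -1 | 4%N => 1 | 5%N => -1 | _ => 0
  end.
Definition row2 (c : nat) : int :=
  match c with
  | 0%N => 1 | 1%N => -1 | 2%N => 1 | 3%N => -1 | 4%N => 0 | 5%N => 0 | 6%N => 1 | _ => -1
  end.
Definition blk_sign (r c : nat) : int :=
  match r with
  | 0%N => row0 c | 1%N => - row0 c | 2%N => row2 c | _ => - row2 c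
  end.

Definition Emat (a b c d e f g h k l : nat) :
  'M[int]_(k + k + l + l, a + b + c + d + e + f + g + h) :=
  \matrix_(i, j) blk_sign (rowblk k l i) (colblk a b c d e f g h j).

(* Main.v *)
Require Import Defs.
From mathcomp Require Import all_boot all_order all_algebra zify ring.
Import GRing.Theory Num.Theory.
Local Open Scope ring_scope.

Definition SEG (C al be ga : nat -> int) (u v w : nat -> int) (bk lo hi : nat) : int :=
  (hi - lo)%:Z * C bk + al bk * \sum_(lo <= j < hi) u j + be bk * \sum_(lo <= j < hi) v j
  + ga bk * \sum_(lo <= j < hi) w j.

Lemma seg_blk (bf : nat -> nat) bk lo hi C al be ga u v w :
  (forall j, (lo <= j < hi)%N -> bf j = bk) ->
  \sum_(lo <= j < hi) (C (bf j) + al (bf j) * u j + be (bf j) * v j + ga (bf j) * w j)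
  = SEG C al be ga u v w bk lo hi.
Proof.
move=> Hb; rewrite (eq_big_nat _ _ (F2 := fun j => C bk + al bk * u j + be bk * v j + ga bk * w j));
  last by move=> j /Hb ->.
rewrite !big_split /= -!mulr_sumr sumr_const_nat.
by rewrite -mulr_natl natz.
Qed.

Lemma sum_pref (G : bool -> int) n m :
  \sum_(0 <= i < n) G (i < m)%N = (minn n m)%:Z * G true + (n - minn n m)%:Z * G false.
Proof.
elim: n => [|n IH]; first by rewrite big_geq // min0n /= !mul0r addr0.
rewrite big_nat_recr //= IH.
case: (boolP (n < m)%N) => H.
- have -> : minn n.+1 m = (minn n m).+1 by lia.
  have -> : (n.+1 - (minn n m).+1 = n - minn n m)%N by lia.
  rewrite intS; ring.
- have -> : minn n.+1 m = minn n m by lia.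
  have -> : (n.+1 - minn n m = (n - minn n m).+1)%N by lia.
  rewrite intS; ring.
Qed.

Lemma seg_bit (bf : nat -> nat) (bt : nat -> bool) bk lo hi m (G : nat -> bool -> int) :
  (lo <= hi)%N ->
  (forall j, (lo <= j < hi)%N -> bf j = bk /\ bt j = (j - lo < m)%N) ->
  \sum_(lo <= j < hi) G (bf j) (bt j)
  = (minn (hi - lo) m)%:Z * G bk true + ((hi - lo) - minn (hi - lo) m)%:Z * G bk false.
Proof.
move=> Hlh Hb.
rewrite (eq_big_nat _ _ (F2 := fun j => G bk (j - lo < m)%N)); last by move=> j /Hb [-> ->].
rewrite -{1}(add0n lo) big_addn.
rewrite (eq_big_nat _ _ (F2 := fun j => G bk (j < m)%N)); last by move=> j _; rewrite addnK.
by rewrite sum_pref.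
Qed.

Lemma sum8 (F : nat -> int) a b c d e f g h :
  \sum_(0 <= j < a+b+c+d+e+f+g+h) F j =
  \sum_(0 <= j < a) F j + \sum_(a <= j < a+b) F j + \sum_(a+b <= j < a+b+c) F j
  + \sum_(a+b+c <= j < a+b+c+d) F j + \sum_(a+b+c+d <= j < a+b+c+d+e) F j
  + \sum_(a+b+c+d+e <= j < a+b+c+d+e+f) F j + \sum_(a+b+c+d+e+f <= j < a+b+c+d+e+f+g) F j
  + \sum_(a+b+c+d+e+f+g <= j < a+b+c+d+e+f+g+h) F j.
Proof.
rewrite (@big_cat_nat _ _ _ (a+b+c+d+e+f+g)) ?leq_addr //.
rewrite (@big_cat_nat _ _ _ (a+b+c+d+e+f) 0 (a+b+c+d+e+f+g)) ?leq_addr //.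
rewrite (@big_cat_nat _ _ _ (a+b+c+d+e) 0 (a+b+c+d+e+f)) ?leq_addr //.
rewrite (@big_cat_nat _ _ _ (a+b+c+d) 0 (a+b+c+d+e)) ?leq_addr //.
rewrite (@big_cat_nat _ _ _ (a+b+c) 0 (a+b+c+d)) ?leq_addr //.
rewrite (@big_cat_nat _ _ _ (a+b) 0 (a+b+c)) ?leq_addr //.
by rewrite (@big_cat_nat _ _ _ a 0 (a+b)) ?leq_addr.
Qed.

Lemma sum4 (F : nat -> int) k l :
  \sum_(0 <= i < k+k+l+l) F i =
  \sum_(0 <= i < k) F i + \sum_(k <= i < k+k) F i + \sum_(k+k <= i < k+k+l) F i
  + \sum_(k+k+l <= i < k+k+l+l) F i.
Proof.
rewrite (@big_cat_nat _ _ _ (k+k+l)) ?leq_addr //.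
rewrite (@big_cat_nat _ _ _ (k+k) 0 (k+k+l)) ?leq_addr //.
by rewrite (@big_cat_nat _ _ _ k 0 (k+k)) ?leq_addr.
Qed.

Ltac blk_tac := move=> ? /andP[? ?]; rewrite /colblk /rowblk; repeat case: ifP => ?; lia.

Lemma sum8_lin a b c d e f g h C al be ga u v w :
  let cb := colblk a b c d e f g h in
  \sum_(0 <= j < a+b+c+d+e+f+g+h) (C (cb j) + al (cb j) * u j + be (cb j) * v j + ga (cb j) * w j)
  = SEG C al be ga u v w 0 0 a + SEG C al be ga u v w 1 a (a+b)
  + SEG C al be ga u v w 2 (a+b) (a+b+c) + SEG C al be ga u v w 3 (a+b+c) (a+b+c+d)
  + SEG C al be ga u v w 4 (a+b+c+d) (a+b+c+d+e)
  + SEG C al be ga u v w 5 (a+b+c+d+e) (a+b+c+d+e+f)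
  + SEG C al be ga u v w 6 (a+b+c+d+e+f) (a+b+c+d+e+f+g)
  + SEG C al be ga u v w 7 (a+b+c+d+e+f+g) (a+b+c+d+e+f+g+h).
Proof.
move=> cb; rewrite sum8.
rewrite (@seg_blk cb 0%N 0 a) 1?(@seg_blk cb 1%N a (a+b)) 1?(@seg_blk cb 2%N (a+b))
  1?(@seg_blk cb 3%N (a+b+c)) 1?(@seg_blk cb 4%N (a+b+c+d)) 1?(@seg_blk cb 5%N (a+b+c+d+e))
  1?(@seg_blk cb 6%N (a+b+c+d+e+f)) 1?(@seg_blk cb 7%N (a+b+c+d+e+f+g)) //; rewrite /cb; blk_tac.
Qed.

Lemma sum4_lin k l C al be ga u v w :
  let rb := rowblk k l in
  \sum_(0 <= i < k+k+l+l) (C (rb i) + al (rb i) * u i + be (rb i) * v i + ga (rb i) * w i)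
  = SEG C al be ga u v w 0 0 k + SEG C al be ga u v w 1 k (k+k)
  + SEG C al be ga u v w 2 (k+k) (k+k+l) + SEG C al be ga u v w 3 (k+k+l) (k+k+l+l).
Proof.
move=> rb; rewrite sum4.
rewrite (@seg_blk rb 0%N 0 k) 1?(@seg_blk rb 1%N k (k+k)) 1?(@seg_blk rb 2%N (k+k))
  1?(@seg_blk rb 3%N (k+k+l)) //; rewrite /rb; blk_tac.
Qed.

Definition bitf a b c d e f g h me mg j : bool :=
  match colblk a b c d e f g h j with
  | 4%N => (j - (a+b+c+d) < me)%N
  | 5%N => (j - (a+b+c+d+e) < me)%N
  | 6%N => (j - (a+b+c+d+e+f) < mg)%N
  | 7%N => (j - (a+b+c+d+e+f+g) < mg)%N
  | _ => false end.

Definition BSEG (G : nat -> bool -> int) bk lo hi m : int :=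
  (minn (hi - lo) m)%:Z * G bk true + ((hi - lo) - minn (hi - lo) m)%:Z * G bk false.

Ltac bit_tac n := move=> ? /andP[? ?]; rewrite /bitf;
  match goal with |- colblk ?a ?b ?c ?d ?e ?f ?g ?h ?j = _ /\ _ =>
    have -> : colblk a b c d e f g h j = n by rewrite /colblk; repeat case: ifP => ?; lia
  end; split => //=; rewrite ?ltn0 //.

Lemma sum8_bit a b c d e f g h me mg G :
  \sum_(0 <= j < a+b+c+d+e+f+g+h) G (colblk a b c d e f g h j) (bitf a b c d e f g h me mg j)
  = BSEG G 0 0 a 0 + BSEG G 1 a (a+b) 0 + BSEG G 2 (a+b) (a+b+c) 0
  + BSEG G 3 (a+b+c) (a+b+c+d) 0 + BSEG G 4 (a+b+c+d) (a+b+c+d+e) me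
  + BSEG G 5 (a+b+c+d+e) (a+b+c+d+e+f) me
  + BSEG G 6 (a+b+c+d+e+f) (a+b+c+d+e+f+g) mg
  + BSEG G 7 (a+b+c+d+e+f+g) (a+b+c+d+e+f+g+h) mg.
Proof.
rewrite sum8 /BSEG.
rewrite (@seg_bit _ _ 0%N 0 a 0) ?leq_addr //; last by bit_tac 0%N.
rewrite (@seg_bit _ _ 1%N a (a+b) 0) ?leq_addr //; last by bit_tac 1%N.
rewrite (@seg_bit _ _ 2%N (a+b) (a+b+c) 0) ?leq_addr //; last by bit_tac 2%N.
rewrite (@seg_bit _ _ 3%N (a+b+c) (a+b+c+d) 0) ?leq_addr //; last by bit_tac 3%N.
rewrite (@seg_bit _ _ 4%N (a+b+c+d) (a+b+c+d+e) me) ?leq_addr //; last by bit_tac 4%N.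
rewrite (@seg_bit _ _ 5%N (a+b+c+d+e) (a+b+c+d+e+f) me) ?leq_addr //; last by bit_tac 5%N.
rewrite (@seg_bit _ _ 6%N (a+b+c+d+e+f) (a+b+c+d+e+f+g) mg) ?leq_addr //; last by bit_tac 6%N.
rewrite (@seg_bit _ _ 7%N (a+b+c+d+e+f+g) (a+b+c+d+e+f+g+h) mg) ?leq_addr //; last by bit_tac 7%N.
Qed.

Definition Av (r cb : nat) (bt : bool) : int :=
  if blk_sign r cb == 0 then (bt : nat)%:Z else if blk_sign r cb == -1 then 1 else 0.

Definition Amat a b c d e f g h k l : 'M[int]_(k + k + l + l, a + b + c + d + e + f + g + h) :=
  \matrix_(i, j) Av (rowblk k l i) (colblk a b c d e f g h j)
     (bitf a b c d e f g h (e + f)./2 (g + h)./2 j).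

Definition Fr r r' cb bt : int :=
  Av r cb bt * Av r' cb bt - (Av r cb bt + blk_sign r cb) * (Av r' cb bt + blk_sign r' cb).

Lemma rowblk_lt k l i : (rowblk k l i < 4)%N.
Proof. by rewrite /rowblk; repeat case: ifP. Qed.

Lemma colblk_lt a b c d e f g h j : (colblk a b c d e f g h j < 8)%N.
Proof. by rewrite /colblk; repeat case: ifP. Qed.

Lemma suff_row a b c d e f g h me mg :
  (a + b + e = c + d + f)%N -> (a + c + g = b + d + h)%N ->
  (e + f = me + me)%N -> (g + h = mg + mg)%N -> forall r r', (r < 4)%N -> (r' < 4)%N ->
  \sum_(0 <= j < a+b+c+d+e+f+g+h)
     Fr r r' (colblk a b c d e f g h j) (bitf a b c d e f g h me mg j) = 0.
Proof.
move=> H1 H2 He Hg r r' Hr Hr'.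
rewrite (sum8_bit _ _ _ _ _ _ _ _ _ _ (Fr r r')) /BSEG.
rewrite !minn0 !subn0 !addKn.
have Fe : (minn e me)%:Z - (minn f me)%:Z + (minn e me)%:Z - (minn f me)%:Z = e%:Z - f%:Z by lia.
have Fg : (minn g mg)%:Z - (minn h mg)%:Z + (minn g mg)%:Z - (minn h mg)%:Z = g%:Z - h%:Z by lia.
have L1 : (minn e me <= e)%N by lia.
have L2 : (minn f me <= f)%N by lia.
have L3 : (minn g mg <= g)%N by lia.
have L4 : (minn h mg <= h)%N by lia.
move: Fe Fg L1 L2 L3 L4; move: (minn e me) (minn f me) (minn g mg) (minn h mg) => pe pf pg ph Fe Fg L1 L2 L3 L4.
move: Hr Hr'; case: r => [|[|[|[|]]]] //; case: r' => [|[|[|[|]]]] // _ _; rewrite /Fr /Av /=.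

all: lia.
Qed.

Lemma mulnz (x : int) n : x *+ n = n%:Z * x.
Proof. by rewrite -mulr_natl natz. Qed.

Lemma sum4_const k l (C : nat -> int) :
  \sum_(0 <= i < k+k+l+l) C (rowblk k l i) = k%:Z * C 0%N + k%:Z * C 1%N + l%:Z * C 2%N + l%:Z * C 3%N.
Proof.
rewrite sum4.
rewrite (eq_big_nat _ _ (m := 0) (n := k) (F2 := fun _ => C 0%N)); last by move=> i /andP[? ?]; congr C; rewrite /rowblk; repeat case: ifP => ?; lia.
rewrite (eq_big_nat _ _ (m := k) (n := k+k) (F2 := fun _ => C 1%N)); last by move=> i /andP[? ?]; congr C; rewrite /rowblk; repeat case: ifP => ?; lia.
rewrite (eq_big_nat _ _ (m := k+k) (n := k+k+l) (F2 := fun _ => C 2%N)); last by move=> i /andP[? ?]; congr C; rewrite /rowblk; repeat case: ifP => ?; lia.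
rewrite (eq_big_nat _ _ (m := k+k+l) (n := k+k+l+l) (F2 := fun _ => C 3%N)); last by move=> i /andP[? ?]; congr C; rewrite /rowblk; repeat case: ifP => ?; lia.
by rewrite !sumr_const_nat !subn0 !addKn !mulnz.
Qed.

Definition Fc cb cb' bt bt' r : int :=
  Av r cb bt * Av r cb' bt' - (Av r cb bt + blk_sign r cb) * (Av r cb' bt' + blk_sign r cb').

Lemma Fc_pair cb cb' bt bt' : (cb < 8)%N -> (cb' < 8)%N ->
  (Fc cb cb' bt bt' 0 + Fc cb cb' bt bt' 1 == 0) && (Fc cb cb' bt bt' 2 + Fc cb cb' bt bt' 3 == 0).
Proof.
move=> H H'; case: bt; case: bt'; move: H H';
case: cb => [|[|[|[|[|[|[|[|cb]]]]]]]]; case: cb' => [|[|[|[|[|[|[|[|cb']]]]]]]] => H H';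
  first [vm_compute; reflexivity | by rewrite ?ltnS ?ltn0 in H H'].
Qed.

Lemma suff_col k l cb cb' bt bt' : (cb < 8)%N -> (cb' < 8)%N ->
  \sum_(0 <= i < k+k+l+l) Fc cb cb' bt bt' (rowblk k l i) = 0.
Proof.
move=> H H'; rewrite sum4_const.
case/andP: (Fc_pair _ _ bt bt' H H') => /eqP E1 /eqP E2.
move: E1 E2; set X0 := Fc _ _ _ _ 0; set X1 := Fc _ _ _ _ 1; set X2 := Fc _ _ _ _ 2;
  set X3 := Fc _ _ _ _ 3 => E1 E2.
have -> : k%:Z * X0 + k%:Z * X1 + l%:Z * X2 + l%:Z * X3 = k%:Z * (X0 + X1) + l%:Z * (X2 + X3) by ring.
by rewrite E1 E2 !mulr0 addr0.
Qed.

Lemma Av01b r cb bt : (r < 4)%N -> (cb < 8)%N ->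
  ((Av r cb bt == 0) || (Av r cb bt == 1)) && ((Av r cb bt + blk_sign r cb == 0) || (Av r cb bt + blk_sign r cb == 1)).
Proof.
move=> H H'; case: bt; move: H H';
case: r => [|[|[|[|r]]]]; case: cb => [|[|[|[|[|[|[|[|cb]]]]]]]] => H H';
  first [vm_compute; reflexivity | by rewrite ?ltnS ?ltn0 in H H'].
Qed.

Lemma gram_rowP m n (A B : 'M[int]_(m, n)) :
  (forall i i', \sum_j (A i j * A i' j - B i j * B i' j) = 0) -> A *m A^T = B *m B^T.
Proof.
move=> H; apply/matrixP => i i'; rewrite !mxE; apply/eqP; rewrite -subr_eq0 -sumrB.
under eq_bigr do rewrite !mxE.
by rewrite H.
Qed.

Lemma gram_colP m n (A B : 'M[int]_(m, n)) :
  (forall j j', \sum_i (A i j * A i j' - B i j * B i j') = 0) -> A^T *m A = B^T *m B.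
Proof.
move=> H; apply/matrixP => j j'; rewrite !mxE; apply/eqP; rewrite -subr_eq0 -sumrB.
under eq_bigr do rewrite !mxE.
by rewrite H.
Qed.

Lemma suff_dir a b c d e f g h k l : (0 < k)%N -> (0 < a + b + c + d)%N ->
  (a + b + e = c + d + f)%N -> (a + c + g = b + d + h)%N ->
  (e + f = (e + f)./2 + (e + f)./2)%N -> (g + h = (g + h)./2 + (g + h)./2)%N ->
  realizable (Emat a b c d e f g h k l).
Proof.
move=> Hk Habcd H1 H2 He Hg.
set A := Amat a b c d e f g h k l; set E := Emat a b c d e f g h k l.
have h01 : forall i j, (A i j = 0 \/ A i j = 1) /\ ((A + E) i j = 0 \/ (A + E) i j = 1).
  move=> i j; rewrite !mxE.
  case/andP: (Av01b _ _ (bitf a b c d e f g h (e + f)./2 (g + h)./2 j) (rowblk_lt k l i) (colblk_lt a b c d e f g h j))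
    => /orP[/eqP H3|/eqP H3] /orP[/eqP H4|/eqP H4]; split; by [left|right].
exists A; split; first by move=> i j; case: (h01 i j).
split.
- by move=> i j; case: (h01 i j).
- by move=> i j; case: (h01 i j).
- apply: gram_rowP => i i'.
  have -> : \sum_j (A i j * A i' j - (A + E) i j * (A + E) i' j) =
     \sum_(0 <= j < a+b+c+d+e+f+g+h) Fr (rowblk k l i) (rowblk k l i') (colblk a b c d e f g h j)
         (bitf a b c d e f g h (e + f)./2 (g + h)./2 j).
    by rewrite big_mkord; apply: eq_bigr => j _; rewrite !mxE.
  by apply: suff_row => //; apply: rowblk_lt.
- apply: gram_colP => j j'.
  have -> : \sum_i (A i j * A i j' - (A + E) i j * (A + E) i j') =
     \sum_(0 <= i < k+k+l+l) Fc (colblk a b c d e f g h j) (colblk a b c d e f g h j')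
         (bitf a b c d e f g h (e + f)./2 (g + h)./2 j) (bitf a b c d e f g h (e + f)./2 (g + h)./2 j')
         (rowblk k l i).
    by rewrite big_mkord; apply: eq_bigr => i _; rewrite !mxE.
  by apply: suff_col; apply: colblk_lt.
- have Hi0 : (0 < k + k + l + l)%N by lia.
  have Hj0 : (0 < a + b + c + d + e + f + g + h)%N by lia.
  move=> /(congr1 (fun M : 'M[int]_(k + k + l + l, a + b + c + d + e + f + g + h) => M (Ordinal Hi0) (Ordinal Hj0))) /eqP.
  rewrite [X in _ == X]mxE -subr_eq0 opprD addrA subrr add0r oppr_eq0 mxE /=.
  have -> : rowblk k l 0 = 0%N by rewrite /rowblk Hk.
  have : (colblk a b c d e f g h 0 < 4)%N by rewrite /colblk; repeat case: ifP => ?; lia.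
  by case: (colblk a b c d e f g h 0) => [|[|[|[|]]]].
Qed.

Definition natf m n (M : 'M[int]_(m, n)) (i j : nat) : int :=
  match (insub i : option 'I_m), (insub j : option 'I_n) with
  | Some i', Some j' => M i' j'
  | _, _ => 0 end.
Arguments natf {m n}.

Lemma natfE m n (M : 'M[int]_(m, n)) (i : 'I_m) (j : 'I_n) : natf M i j = M i j.
Proof. by rewrite /natf !valK. Qed.

Lemma gram_row_sum m n (A B : 'M[int]_(m, n)) : A *m A^T = B *m B^T ->
  forall i i', \sum_j (A i j * A i' j - B i j * B i' j) = 0.
Proof.
move=> H i i'.
have Hs : forall M : 'M[int]_(m, n), (M *m M^T) i i' = \sum_j M i j * M i' j.
  by move=> M; rewrite !mxE; apply: eq_bigr => j _; rewrite mxE.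
by rewrite sumrB -!Hs H subrr.
Qed.

Lemma gram_col_sum m n (A B : 'M[int]_(m, n)) : A^T *m A = B^T *m B ->
  forall j j', \sum_i (A i j * A i j' - B i j * B i j') = 0.
Proof.
move=> H j j'.
have Hs : forall M : 'M[int]_(m, n), (M^T *m M) j j' = \sum_i M i j * M i j'.
  by move=> M; rewrite !mxE; apply: eq_bigr => i _; rewrite mxE.
by rewrite sumrB -!Hs H subrr.
Qed.

Definition cP (e e' : int) : int :=
  - e' * (if e == -1 then 1 else 0) - e * (if e' == -1 then 1 else 0) - e * e'.
Definition aP (e e' : int) : int := - e' * (if e == 0 then 1 else 0).
Definition bP (e e' : int) : int := - e * (if e' == 0 then 1 else 0).

Lemma lin' x y u v : (x = 0 \/ x = 1) -> (u = 0 \/ u = 1) ->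
  (y = 0 \/ y = 1) -> (v = 0 \/ v = 1) ->
  x * y - u * v = cP (u - x) (v - y) + aP (u - x) (v - y) * x + bP (u - x) (v - y) * y.
Proof.
by case=> ->; case=> ->; case=> ->; case=> ->; vm_compute.
Qed.

Lemma lin x y e e' : (x = 0 \/ x = 1) -> (x + e = 0 \/ x + e = 1) ->
  (y = 0 \/ y = 1) -> (y + e' = 0 \/ y + e' = 1) ->
  x * y - (x + e) * (y + e') = cP e e' + aP e e' * x + bP e e' * y.
Proof.
move=> Hx Hxe Hy Hye; have := lin' _ _ _ _ Hx Hxe Hy Hye.
by rewrite [x + e]addrC [y + e']addrC !addrK.
Qed.

Definition SEG2 (C al be : nat -> int) (u v : nat -> int) (bk lo hi : nat) : int :=
  (hi - lo)%:Z * C bk + al bk * \sum_(lo <= j < hi) u j + be bk * \sum_(lo <= j < hi) v j.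

Lemma sum8_lin2 a b c d e f g h C al be u v :
  \sum_(0 <= j < a+b+c+d+e+f+g+h)
     (C (colblk a b c d e f g h j) + al (colblk a b c d e f g h j) * u j
      + be (colblk a b c d e f g h j) * v j)
  = SEG2 C al be u v 0 0 a + SEG2 C al be u v 1 a (a+b)
  + SEG2 C al be u v 2 (a+b) (a+b+c) + SEG2 C al be u v 3 (a+b+c) (a+b+c+d)
  + SEG2 C al be u v 4 (a+b+c+d) (a+b+c+d+e)
  + SEG2 C al be u v 5 (a+b+c+d+e) (a+b+c+d+e+f)
  + SEG2 C al be u v 6 (a+b+c+d+e+f) (a+b+c+d+e+f+g)
  + SEG2 C al be u v 7 (a+b+c+d+e+f+g) (a+b+c+d+e+f+g+h).
Proof.
have := sum8_lin a b c d e f g h C al be (fun _ => 0) u v (fun _ => 0).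
rewrite /SEG /SEG2 /= !mul0r !addr0 => <-.
by apply: eq_big_nat => j _; rewrite ?mul0r ?mulr0 addr0.
Qed.

Lemma sum4_lin2 k l C al be u v :
  \sum_(0 <= i < k+k+l+l) (C (rowblk k l i) + al (rowblk k l i) * u i + be (rowblk k l i) * v i)
  = SEG2 C al be u v 0 0 k + SEG2 C al be u v 1 k (k+k)
  + SEG2 C al be u v 2 (k+k) (k+k+l) + SEG2 C al be u v 3 (k+k+l) (k+k+l+l).
Proof.
have := sum4_lin k l C al be (fun _ => 0) u v (fun _ => 0).
rewrite /SEG /SEG2 /= !mul0r !addr0 => <-.
by apply: eq_big_nat => j _; rewrite ?mul0r ?mulr0 addr0.
Qed.

Lemma sum8_const a b c d e f g h C :
  \sum_(0 <= j < a+b+c+d+e+f+g+h) C (colblk a b c d e f g h j)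
  = a%:Z * C 0%N + b%:Z * C 1%N + c%:Z * C 2%N + d%:Z * C 3%N + e%:Z * C 4%N + f%:Z * C 5%N
    + g%:Z * C 6%N + h%:Z * C 7%N.
Proof.
have := sum8_lin2 a b c d e f g h C (fun _ => 0) (fun _ => 0) (fun _ => 0) (fun _ => 0).
rewrite /SEG2 /= ?mul0r ?addr0 ?subn0 ?addKn => <-.
by apply: eq_big_nat => j _; rewrite ?mul0r ?addr0.
Qed.

Lemma rowsums a b c d e f g h k l : (0 < k)%N -> (0 < l)%N ->
  Emat a b c d e f g h k l *m (const_mx 1 : 'cV[int]_(a + b + c + d + e + f + g + h)) = 0 ->
  (a + b + e = c + d + f)%N /\ (a + c + g = b + d + h)%N.
Proof.
move=> Hk Hl H.
have Hs : forall i : 'I_(k + k + l + l),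
    (Emat a b c d e f g h k l *m (const_mx 1 : 'cV[int]_(a + b + c + d + e + f + g + h))) i ord0
    = \sum_(0 <= j < a+b+c+d+e+f+g+h) blk_sign (rowblk k l i) (colblk a b c d e f g h j).
  by move=> i; rewrite mxE big_mkord; apply: eq_bigr => j _; rewrite !mxE mulr1.
have Hi0 : (0 < k + k + l + l)%N by lia.
have Hi2 : (k + k < k + k + l + l)%N by lia.
have E0 := Hs (Ordinal Hi0); have E2 := Hs (Ordinal Hi2).
rewrite H mxE /= in E0; rewrite H mxE /= in E2.
have R0 : rowblk k l 0 = 0%N by rewrite /rowblk Hk.
have R2 : rowblk k l (k + k) = 2%N by rewrite /rowblk; repeat case: ifP => ?; lia.
rewrite R0 in E0; rewrite R2 in E2.
rewrite sum8_const /= in E0; rewrite sum8_const /= in E2.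
split; lia.
Qed.

Arguments natfE {m n}.
Arguments gram_row_sum {m n A B}.
Arguments gram_col_sum {m n A B}.

Lemma nec_dir a b c d e f g h k l : (0 < k)%N -> (0 < l)%N -> (0 < a + b + c + d)%N ->
  realizable (Emat a b c d e f g h k l) ->
  exists W : int, a%:Z + b%:Z - c%:Z - d%:Z = W + W.
Proof.
move=> Hk Hl Habcd [A [_ [h0 h1 gA gB _]]].
pose An := natf A.
pose En := fun i j => blk_sign (rowblk k l i) (colblk a b c d e f g h j).
have F01 : forall i j, (i < k + k + l + l)%N -> (j < a + b + c + d + e + f + g + h)%N ->
    (An i j = 0 \/ An i j = 1) /\ (An i j + En i j = 0 \/ An i j + En i j = 1).
  move=> i j Hi Hj; have := h0 (Ordinal Hi) (Ordinal Hj); have := h1 (Ordinal Hi) (Ordinal Hj).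
  rewrite !mxE /An (natfE A (Ordinal Hi) (Ordinal Hj)) => H1 H0; split; [exact: H0 | exact: H1].
have RG : forall i i', (i < k + k + l + l)%N -> (i' < k + k + l + l)%N ->
    \sum_(0 <= j < a + b + c + d + e + f + g + h)
      (An i j * An i' j - (An i j + En i j) * (An i' j + En i' j)) = 0.
  move=> i i' Hi Hi'; rewrite big_mkord -[RHS](gram_row_sum gA (Ordinal Hi) (Ordinal Hi')).
  apply: eq_bigr => j _; rewrite !mxE /An (natfE A (Ordinal Hi) j) (natfE A (Ordinal Hi') j).
  done.
have CG : forall j j', (j < a + b + c + d + e + f + g + h)%N -> (j' < a + b + c + d + e + f + g + h)%N ->
    \sum_(0 <= i < k + k + l + l)
      (An i j * An i j' - (An i j + En i j) * (An i j' + En i j')) = 0.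
  move=> j j' Hj Hj'; rewrite big_mkord -[RHS](gram_col_sum gB (Ordinal Hj) (Ordinal Hj')).
  apply: eq_bigr => i _; rewrite !mxE /An (natfE A i (Ordinal Hj)) (natfE A i (Ordinal Hj')).
  done.
have RL : forall i i', (i < k + k + l + l)%N -> (i' < k + k + l + l)%N ->
    \sum_(0 <= j < a + b + c + d + e + f + g + h)
      (cP (En i j) (En i' j) + aP (En i j) (En i' j) * An i j + bP (En i j) (En i' j) * An i' j) = 0.
  move=> i i' Hi Hi'; rewrite -[RHS](RG i i' Hi Hi'); apply: eq_big_nat => j /andP[_ Hj].
  case: (F01 i j Hi Hj) => H1 H2; case: (F01 i' j Hi' Hj) => H3 H4.
  by rewrite (lin _ _ _ _ H1 H2 H3 H4).
have CL : forall j j', (j < a + b + c + d + e + f + g + h)%N -> (j' < a + b + c + d + e + f + g + h)%N ->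
    \sum_(0 <= i < k + k + l + l)
      (cP (En i j) (En i j') + aP (En i j) (En i j') * An i j + bP (En i j) (En i j') * An i j') = 0.
  move=> j j' Hj Hj'; rewrite -[RHS](CG j j' Hj Hj'); apply: eq_big_nat => i /andP[_ Hi].
  case: (F01 i j Hi Hj) => H1 H2; case: (F01 i j' Hi Hj') => H3 H4.
  by rewrite (lin _ _ _ _ H1 H2 H3 H4).
have HN0 : (0 < a + b + c + d + e + f + g + h)%N by lia.
have b0lt : (colblk a b c d e f g h 0 < 4)%N by rewrite /colblk; repeat case: ifP => ?; lia.
have S1 : forall j', (a + b + c + d + e + f <= j' < a + b + c + d + e + f + g + h)%N ->
    \sum_(0 <= i < k) An i j' = \sum_(k <= i < k + k) An i j'.
  move=> j' /andP[Hj1 Hj2].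
  have Hb' : colblk a b c d e f g h j' = 6%N \/ colblk a b c d e f g h j' = 7%N.
    by rewrite /colblk; repeat case: ifP => ?; lia.
  have := CL 0%N j' HN0 Hj2.
  rewrite /En (sum4_lin2 k l (fun r => cP (blk_sign r (colblk a b c d e f g h 0)) (blk_sign r (colblk a b c d e f g h j')))
     (fun r => aP (blk_sign r (colblk a b c d e f g h 0)) (blk_sign r (colblk a b c d e f g h j')))
     (fun r => bP (blk_sign r (colblk a b c d e f g h 0)) (blk_sign r (colblk a b c d e f g h j')))
     (fun i => An i 0%N) (fun i => An i j')).
  rewrite /SEG2.
  move: b0lt Hb'; case: (colblk a b c d e f g h 0) => [|[|[|[|]]]] // _; case=> ->; rewrite /cP /aP /bP /=; lia.
have Hi2 : (k + k < k + k + l + l)%N by lia.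
pose s4 := (a + b + c + d)%N. pose s5 := (a + b + c + d + e)%N. pose s6 := (a + b + c + d + e + f)%N.
pose s7 := (a + b + c + d + e + f + g)%N.
pose Ze := \sum_(s4 <= j < s5) An (k + k)%N j.
pose Zf := \sum_(s5 <= j < s6) An (k + k)%N j.
pose Xg := fun i => \sum_(s6 <= j < s7) An i j.
pose Xh := fun i => \sum_(s7 <= j < a + b + c + d + e + f + g + h) An i j.
have EqA : forall i, (0 <= i < k)%N -> Xg i - Xh i = d%:Z - a%:Z + Zf - Ze.
  move=> i /andP[_ Hi]; have Hi' : (i < k + k + l + l)%N by lia.
  have := RL i (k + k)%N Hi' Hi2.
  rewrite /En (_ : rowblk k l i = 0%N); last by rewrite /rowblk Hi.
  rewrite (_ : rowblk k l (k + k) = 2%N); last by rewrite /rowblk; repeat case: ifP => ?; lia.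
  rewrite (sum8_lin2 a b c d e f g h (fun cb => cP (blk_sign 0 cb) (blk_sign 2 cb))
     (fun cb => aP (blk_sign 0 cb) (blk_sign 2 cb)) (fun cb => bP (blk_sign 0 cb) (blk_sign 2 cb))
     (fun j => An i j) (fun j => An (k + k)%N j)).
  rewrite /SEG2 /cP /aP /bP /Xg /Xh /Ze /Zf /s4 /s5 /s6 /s7 /=; lia.
have EqB : forall i, (k <= i < k + k)%N -> Xg i - Xh i = b%:Z - c%:Z + Ze - Zf.
  move=> i /andP[Hi1 Hi]; have Hi' : (i < k + k + l + l)%N by lia.
  have := RL i (k + k)%N Hi' Hi2.
  rewrite /En (_ : rowblk k l i = 1%N); last by rewrite /rowblk; repeat case: ifP => ?; lia.
  rewrite (_ : rowblk k l (k + k) = 2%N); last by rewrite /rowblk; repeat case: ifP => ?; lia.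
  rewrite (sum8_lin2 a b c d e f g h (fun cb => cP (blk_sign 1 cb) (blk_sign 2 cb))
     (fun cb => aP (blk_sign 1 cb) (blk_sign 2 cb)) (fun cb => bP (blk_sign 1 cb) (blk_sign 2 cb))
     (fun j => An i j) (fun j => An (k + k)%N j)).
  rewrite /SEG2 /cP /aP /bP /Xg /Xh /Ze /Zf /s4 /s5 /s6 /s7 /=; lia.
have XG : \sum_(0 <= i < k) Xg i = \sum_(k <= i < k + k) Xg i.
  rewrite /Xg exchange_big_nat [RHS]exchange_big_nat; apply: eq_big_nat => j /andP[Hj1 Hj2].
  by apply: S1; rewrite /s6 /s7 in Hj1 Hj2 *; apply/andP; split; lia.
have XH : \sum_(0 <= i < k) Xh i = \sum_(k <= i < k + k) Xh i.
  rewrite /Xh exchange_big_nat [RHS]exchange_big_nat; apply: eq_big_nat => j /andP[Hj1 Hj2].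
  by apply: S1; rewrite /s6 /s7 in Hj1 Hj2 *; apply/andP; split; lia.
have SA : \sum_(0 <= i < k) (Xg i - Xh i) = k%:Z * (d%:Z - a%:Z + Zf - Ze).
  rewrite (eq_big_nat _ _ (F2 := fun _ => d%:Z - a%:Z + Zf - Ze)); last exact: EqA.
  by rewrite sumr_const_nat subn0 mulnz.
have SB : \sum_(k <= i < k + k) (Xg i - Xh i) = k%:Z * (b%:Z - c%:Z + Ze - Zf).
  rewrite (eq_big_nat _ _ (F2 := fun _ => b%:Z - c%:Z + Ze - Zf)); last exact: EqB.
  by rewrite sumr_const_nat addKn mulnz.
rewrite sumrB XG XH in SA; rewrite sumrB SA in SB.
have Hk0 : k%:Z != 0 by apply/negP => /eqP; lia.
have E := mulfI Hk0 SB.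
exists (Zf - Ze); lia.
Qed.

Lemma half_even (e f : nat) (p : int) : e%:Z - f%:Z = p * 2 -> (e + f = (e + f)./2 + (e + f)./2)%N.
Proof.
move=> Hp; have HH := odd_double_half (e + f); rewrite -muln2 in HH.
by move: HH; case: (odd (e + f)) => /= HH; lia.
Qed.

Theorem corollary4p16 (a b c d e f g h k l : nat) :
  (0 < k)%N -> (0 < l)%N ->
  (0 < a + b + c + d)%N -> (0 < e + f)%N -> (0 < g + h)%N ->
  Emat a b c d e f g h k l *m (const_mx 1 : 'cV[int]_(a + b + c + d + e + f + g + h)) = 0 ->
  (const_mx 1 : 'rV[int]_(k + k + l + l)) *m Emat a b c d e f g h k l = 0 ->
  (realizable (Emat a b c d e f g h k l) <->
   ((2 %| (g%:Z - h%:Z))%Z /\ (2 %| (e%:Z - f%:Z))%Z)).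
Proof.
move=> Hk Hl Habcd Hef Hgh HE1 _.
have [H1 H2] := rowsums _ _ _ _ _ _ _ _ _ _ Hk Hl HE1.
split.
- move=> Hr; have [W HW] := nec_dir _ _ _ _ _ _ _ _ _ _ Hk Hl Habcd Hr.
  split; apply/dvdzP.
  + by exists (- W + b%:Z - c%:Z); lia.
  + by exists (- W); lia.
- case=> /dvdzP [q Hq] /dvdzP [p Hp].
  apply: suff_dir => //; [exact: half_even Hp | exact: half_even Hq].
Qed.
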